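(* Let $K\ge 1$ be an integer, let $\lambda_1\ge\lambda_2\ge\cdots\ge\lambda_K>0$, $\Psi>0$, $r_{min}\ge 0$ be real numbers. For $\rho=(\rho_1,\dots,\rho_K)\in[0,\infty)^K$ define $$r_i^U(\rho)=\log_2\!\left(1+\frac{\rho_i\lambda_i}{\sum_{j=1}^{i-1}\rho_j\lambda_i+\Psi}\right),\qquad i=1,\dots,K.$$ Define $\rho_{i,min}$ recursively by $\rho_{i,min}=(2^{r_{min}}-1)\big(\sum_{j=1}^{i-1}\rho_{j,min}+\Psi/\lambda_i\big)$ (so that user $i$ gets rate exactly $r_{min}$ when every user $j$ is allocated $\rho_{j,min}$), and let $\rho_{sum}^{min}=\sum_{i=1}^K\rho_{i,min}$. For an allocation $\rho$ write $\triangle\rho_i=\rho_i-\rho_{i,min}$ and $$\rho_i^e=\Big(\triangle\rho_i-(2^{r_{min}}-1)\sum_{j=1}^{i-1}\triangle\rho_j\Big)2^{(K-i)r_{min}}$$ (the transformed excess power of user $i$). Let $\rho_U\ge\rho_{sum}^{min}$. Then, over all $\rho\in[0,\infty)^K$ with $\sum_{i=1}^K\rho_i=\rho_U$ and $r_i^U(\rho)\ge r_{min}$ for all $i$, the sum rate $\sum_{i=1}^K r_i^U(\rho)$ is maximized by allocating all the excess power to user $1$, i.e. by the allocation with $\rho_1^e=\rho_U-\rho_{sum}^{min}$ and $\rho_i^e=0$ for $i\ge 2$, and the maximum value is $$\sum_{i=1}^K r_i^U=Kr_{min}+\triangle r_1^U=Kr_{min}+\log_2\!\left(1+\frac{(\rho_U-\rho_{sum}^{min})\lambda_1}{\Psi\,2^{Kr_{min}}}\right),$$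 where $\triangle r_i^U=r_i^U(\rho)-r_{min}$ (so $\triangle r_i^U=0$ for $i\ge2$ at the optimum).
   Context: Setting: NOMA downlink with $K$ users decoded by successive interference cancellation; $\rho_i$ is the transmit SNR allocated to user $i$, $\lambda_i$ its estimated channel gain (users indexed from strongest to weakest channel), $\Psi>0$ a constant effective noise term, $r_{min}$ the minimum required unicast rate per user, $\rho_U$ the total unicast SNR. Empty sums are zero. *)

(* Defs.v *)
(* concrete classical reals R. Users are indexed 1..K. *)
From Stdlib Require Import Reals Lra Lia.
Open Scope R_scope.

Fixpoint sum1 (n : nat) (f : nat -> R) : R :=
  match n with
  | O => 0
  | S m => sum1 m f + f (S m)
  end.

Definition log2 (x : R) : R := ln x / ln 2.

Definition pow2 (x : R) : R := Rpower 2 x.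

Definition rU (lam : nat -> R) (Psi : R) (rho : nat -> R) (i : nat) : R :=
  log2 (1 + rho i * lam i / (sum1 (i - 1) rho * lam i + Psi)).

Definition sumrate (K : nat) (lam : nat -> R) (Psi : R) (rho : nat -> R) : R :=
  sum1 K (rU lam Psi rho).

Definition rho_e (K : nat) (rmin : R) (rhomin rho : nat -> R) (i : nat) : R :=
  ((rho i - rhomin i)
   - (pow2 rmin - 1) * sum1 (i - 1) (fun j => rho j - rhomin j))
  * pow2 (INR (K - i) * rmin).

Definition feasible (K : nat) (lam : nat -> R) (Psi rmin rhoU : R)
  (rho : nat -> R) : Prop :=
  (forall i, (1 <= i <= K)%nat -> 0 <= rho i) /\
  sum1 K rho = rhoU /\
  (forall i, (1 <= i <= K)%nat -> rU lam Psi rho i >= rmin).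

(* Main.v *)
Require Import Defs.
From Stdlib Require Import Reals Lra Lia Psatz.
Open Scope R_scope.

Fixpoint prod1 (n : nat) (f : nat -> R) : R :=
  match n with O => 1 | S m => prod1 m f * f (S m) end.

Lemma ln2_pos : 0 < ln 2.
Proof. rewrite <- ln_1. apply ln_increasing; lra. Qed.

Lemma log2_le x y : 0 < x -> x <= y -> log2 x <= log2 y.
Proof.
  intros Hx Hxy. unfold log2, Rdiv. apply Rmult_le_compat_r.
  left; apply Rinv_0_lt_compat, ln2_pos.
  destruct Hxy as [H|H]; [left; apply ln_increasing; auto | subst; lra].
Qed.

Lemma log2_lt x y : 0 < x -> x < y -> log2 x < log2 y.
Proof.
  intros Hx Hxy. unfold log2, Rdiv. apply Rmult_lt_compat_r.
  apply Rinv_0_lt_compat, ln2_pos. apply ln_increasing; auto.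
Qed.

Lemma log2_mult x y : 0 < x -> 0 < y -> log2 (x*y) = log2 x + log2 y.
Proof. intros. unfold log2. rewrite ln_mult; auto. field. apply Rgt_not_eq, ln2_pos. Qed.

Lemma log2_pow2 r : log2 (pow2 r) = r.
Proof. unfold log2, pow2, Rpower. rewrite ln_exp. field. apply Rgt_not_eq, ln2_pos. Qed.

Lemma pow2_ge1 r : 0 <= r -> 1 <= pow2 r.
Proof.
  intros. unfold pow2, Rpower. rewrite <- exp_0.
  destruct (Req_dec r 0). subst; rewrite Rmult_0_l; lra.
  left. apply exp_increasing. pose proof ln2_pos. nra.
Qed.

Lemma pow2_INR n r : pow2 (INR n * r) = (pow2 r) ^ n.
Proof.
  unfold pow2. rewrite Rmult_comm, <- Rpower_mult. apply Rpower_pow.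
  unfold Rpower; apply exp_pos.
Qed.

Lemma sum_log2 n f : (forall i, (1 <= i <= n)%nat -> 0 < f i) ->
  sum1 n (fun i => log2 (f i)) = log2 (prod1 n f) /\ 0 < prod1 n f.
Proof.
  induction n; intros H; simpl.
  - unfold log2; rewrite ln_1; split; [field; apply Rgt_not_eq, ln2_pos | lra].
  - destruct IHn as [H1 H2]. { intros; apply H; lia. }
    assert (0 < f (S n)) by (apply H; lia).
    rewrite H1, log2_mult; auto. split; auto. apply Rmult_lt_0_compat; auto.
Qed.

Lemma sum1_ext n f g : (forall i, (1 <= i <= n)%nat -> f i = g i) -> sum1 n f = sum1 n g.
Proof.
  induction n; intros H; simpl; auto.
  rewrite IHn, H; auto; try lia. intros; apply H; lia.
Qed.

Lemma sum1_plus n f g : sum1 n (fun i => f i + g i) = sum1 n f + sum1 n g.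
Proof. induction n; simpl; [lra | rewrite IHn; lra]. Qed.

Lemma sum1_minus n f g : sum1 n (fun i => f i - g i) = sum1 n f - sum1 n g.
Proof. induction n; simpl; [lra | rewrite IHn; lra]. Qed.

Lemma sum1_nonneg n f : (forall i, (1 <= i <= n)%nat -> 0 <= f i) -> 0 <= sum1 n f.
Proof.
  induction n; intros H; simpl; [lra|].
  assert (0 <= f (S n)) by (apply H; lia).
  assert (0 <= sum1 n f) by (apply IHn; intros; apply H; lia). lra.
Qed.

Lemma sum_const_tail k f r : (forall i, (2 <= i <= S k)%nat -> f i = r) ->
  sum1 (S k) f = f 1%nat + INR k * r.
Proof.
  induction k; intros H.
  - simpl. lra.
  - change (sum1 (S (S k)) f) with (sum1 (S k) f + f (S (S k))).
    rewrite IHk by (intros; apply H; lia). rewrite (H (S (S k))) by lia.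
    rewrite S_INR. lra.
Qed.
Theorem proposition2 (K : nat) (lam : nat -> R) (Psi rmin rhoU : R)
  (rhomin : nat -> R)
  (HK : (1 <= K)%nat)
  (Hlam_ord : forall i, (1 <= i < K)%nat -> lam (S i) <= lam i)
  (Hlam_pos : lam K > 0)
  (HPsi : Psi > 0)
  (Hrmin : rmin >= 0)
  (Hrhomin : forall i, (1 <= i <= K)%nat ->
     rhomin i = (pow2 rmin - 1) * (sum1 (i - 1) rhomin + Psi / lam i))
  (HrhoU : rhoU >= sum1 K rhomin) :
  let V := INR K * rmin
           + log2 (1 + (rhoU - sum1 K rhomin) * lam 1%nat
                       / (Psi * pow2 (INR K * rmin))) in
  (* the "all excess power to user 1" allocation exists and is feasible *)
  (exists rho, feasible K lam Psi rmin rhoU rho /\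
     rho_e K rmin rhomin rho 1%nat = rhoU - sum1 K rhomin /\
     (forall i, (2 <= i <= K)%nat -> rho_e K rmin rhomin rho i = 0)) /\
  (* any such allocation attains V, with users i >= 2 at exactly rmin *)
  (forall rho, feasible K lam Psi rmin rhoU rho ->
     rho_e K rmin rhomin rho 1%nat = rhoU - sum1 K rhomin ->
     (forall i, (2 <= i <= K)%nat -> rho_e K rmin rhomin rho i = 0) ->
     sumrate K lam Psi rho = V /\
     sumrate K lam Psi rho = INR K * rmin + (rU lam Psi rho 1%nat - rmin) /\
     (forall i, (2 <= i <= K)%nat -> rU lam Psi rho i = rmin)) /\
  (* V is the maximum sum rate over all feasible allocations *)
  (forall rho, feasible K lam Psi rmin rhoU rho -> sumrate K lam Psi rho <= V).
Proof.
  intros V.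
  set (a := pow2 rmin).
  assert (Ha1 : 1 <= a) by (apply pow2_ge1; lra).
  set (mu := fun i => Psi / lam i).
  assert (Hlampos : forall i, (1 <= i <= K)%nat -> lam i > 0).
  { assert (forall k, (1 <= K - k)%nat -> lam (K - k)%nat >= lam K).
    { induction k; intros Hk. replace (K - 0)%nat with K by lia; lra.
      assert (lam (S (K - S k)) <= lam (K - S k)%nat) by (apply Hlam_ord; lia).
      replace (S (K - S k)) with (K - k)%nat in H by lia.
      assert (lam (K - k)%nat >= lam K) by (apply IHk; lia). lra. }
    intros i Hi. replace i with (K - (K - i))%nat by lia.
    assert (lam (K - (K - i))%nat >= lam K) by (apply H; lia). lra. }
  assert (Hmupos : forall i, (1 <= i <= K)%nat -> mu i > 0).
  { intros i Hi. unfold mu. specialize (Hlampos i Hi).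
    apply Rdiv_lt_0_compat; lra. }
  assert (Hmumono : forall n, (1 <= n < K)%nat -> mu n <= mu (S n)).
  { intros n Hn. unfold mu, Rdiv. apply Rmult_le_compat_l; [lra|].
    apply Rinv_le_contravar. apply Hlampos; lia. apply Hlam_ord; lia. }
  assert (Hsm : forall n, (n < K)%nat ->
     sum1 (S n) rhomin = a * sum1 n rhomin + (a - 1) * mu (S n)).
  { intros n Hn. change (sum1 (S n) rhomin) with (sum1 n rhomin + rhomin (S n)).
    rewrite (Hrhomin (S n)) by lia. replace (S n - 1)%nat with n by lia.
    unfold mu, a. ring. }
  assert (Hgeo : forall n, (1 <= n <= K)%nat -> sum1 n rhomin + mu n >= a ^ n * mu 1%nat).
  { induction n; intros Hn; [lia|].
    destruct n.
    - rewrite Hsm by lia. simpl. lra.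
    - rewrite Hsm by lia.
      assert (sum1 (S n) rhomin + mu (S n) >= a ^ (S n) * mu 1%nat) by (apply IHn; lia).
      assert (mu (S n) <= mu (S (S n))) by (apply Hmumono; lia).
      change (a ^ S (S n)) with (a * a ^ (S n)). nra. }
  assert (Hmu' : forall n, (n < K)%nat -> sum1 n rhomin + mu (S n) >= a ^ n * mu 1%nat).
  { intros [|n] Hn. simpl. lra.
    assert (sum1 (S n) rhomin + mu (S n) >= a ^ (S n) * mu 1%nat) by (apply Hgeo; lia).
    assert (mu (S n) <= mu (S (S n))) by (apply Hmumono; lia). lra. }
  assert (Hsmnn : forall n, (n <= K)%nat -> 0 <= sum1 n rhomin).
  { induction n; intros Hn; simpl; [lra|].
    assert (0 <= sum1 n rhomin) by (apply IHn; lia).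
    rewrite (Hrhomin (S n)) by lia. replace (S n - 1)%nat with n by lia.
    assert (0 < mu (S n)) by (apply Hmupos; lia). unfold mu in H0.
    assert (0 <= pow2 rmin - 1) by (fold a; lra). nra. }
  set (tt := fun (rho : nat -> R) (i : nat) =>
        1 + rho i * lam i / (sum1 (i - 1) rho * lam i + Psi)).
  assert (Hrel : forall rho, (forall i, (1 <= i <= K)%nat -> 0 <= rho i) ->
     forall i, (1 <= i <= K)%nat ->
       sum1 i rho + mu i = tt rho i * (sum1 (i - 1) rho + mu i) /\ 1 <= tt rho i
       /\ 0 < sum1 (i - 1) rho + mu i).
  { intros rho Hnn i Hi. destruct i as [|m]; [lia|].
    replace (S m - 1)%nat with m by lia.
    assert (0 <= sum1 m rho) by (apply sum1_nonneg; intros; apply Hnn; lia).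
    assert (Hl : lam (S m) > 0) by (apply Hlampos; lia).
    assert (0 <= rho (S m)) by (apply Hnn; lia).
    assert (0 < mu (S m)) by (apply Hmupos; lia).
    assert (0 < sum1 m rho * lam (S m) + Psi) by nra.
    unfold tt. replace (S m - 1)%nat with m by lia.
    split; [|split].
    - change (sum1 (S m) rho) with (sum1 m rho + rho (S m)). unfold mu. field. lra.
    - assert (0 <= rho (S m) * lam (S m) / (sum1 m rho * lam (S m) + Psi)).
      { apply Rmult_le_pos. nra. left; apply Rinv_0_lt_compat; lra. } lra.
    - lra. }
  set (B := fun (rho : nat -> R) (n : nat) =>
        a ^ n + (sum1 n rho - sum1 n rhomin) / mu 1%nat).
  assert (Hmu1 : 0 < mu 1%nat) by (apply Hmupos; lia).
  assert (Hmain : forall rho, (forall i, (1 <= i <= K)%nat -> 0 <= rho i) ->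
     (forall i, (1 <= i <= K)%nat -> tt rho i >= a) ->
     (forall n, (n <= K)%nat -> prod1 n (tt rho) <= B rho n) /\
     ((forall i, (2 <= i <= K)%nat -> tt rho i = a) ->
      forall n, (n <= K)%nat -> prod1 n (tt rho) = B rho n)).
  { intros rho Hnn Hta.
    assert (Hid : forall n, (n < K)%nat ->
       B rho (S n) - B rho n * tt rho (S n)
       = (tt rho (S n) - a) * ((sum1 n rhomin + mu (S n)) / mu 1%nat - a ^ n)).
    { intros n Hn. destruct (Hrel rho Hnn (S n)) as [E1 _]; [lia|].
      replace (S n - 1)%nat with n in E1 by lia.
      unfold B. rewrite Hsm by lia.
      replace (sum1 (S n) rho) with (tt rho (S n) * (sum1 n rho + mu (S n)) - mu (S n)) by lra.
      simpl. field. lra. }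
    assert (Hx : forall n, (n < K)%nat -> 0 <= (sum1 n rhomin + mu (S n)) / mu 1%nat - a ^ n).
    { intros n Hn. specialize (Hmu' n Hn).
      assert (a ^ n <= (sum1 n rhomin + mu (S n)) / mu 1%nat).
      { apply (Rmult_le_reg_r (mu 1%nat)); auto. unfold Rdiv. rewrite Rmult_assoc, Rinv_l; lra. }
      lra. }
    split.
    - induction n; intros Hn.
      + unfold B. simpl. lra.
      + assert (IH := IHn ltac:(lia)).
        assert (Ht := Hta (S n) ltac:(lia)).
        destruct (Hrel rho Hnn (S n)) as [_ [Ht1 _]]; [lia|].
        specialize (Hid n ltac:(lia)). specialize (Hx n ltac:(lia)).
        simpl. assert (prod1 n (tt rho) * tt rho (S n) <= B rho n * tt rho (S n)).
        { apply Rmult_le_compat_r; lra. }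
        assert (0 <= (tt rho (S n) - a) * ((sum1 n rhomin + mu (S n)) / mu 1%nat - a ^ n)).
        { apply Rmult_le_pos; lra. }
        lra.
    - intros Heq. induction n; intros Hn.
      + unfold B. simpl. lra.
      + assert (IH := IHn ltac:(lia)).
        specialize (Hid n ltac:(lia)). simpl. rewrite IH.
        assert ((tt rho (S n) - a) * ((sum1 n rhomin + mu (S n)) / mu 1%nat - a ^ n) = 0).
        { destruct n.
          - simpl. replace ((0 + mu 1%nat) / mu 1%nat) with 1 by (field; lra). ring.
          - rewrite Heq by lia. ring. }
        lra. }
  assert (Hapos : 0 < a) by lra.
  assert (HlogA : log2 a = rmin) by apply log2_pow2.
  assert (Htt : forall rho, feasible K lam Psi rmin rhoU rho ->
            forall i, (1 <= i <= K)%nat -> tt rho i >= a).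
  { intros rho [Hnn [_ Hr]] i Hi. specialize (Hr i Hi).
    destruct (Hrel rho Hnn i Hi) as [_ [Ht1 _]].
    destruct (Rlt_or_le (tt rho i) a) as [Hlt|Hle]; [|lra].
    exfalso. assert (log2 (tt rho i) < log2 a) by (apply log2_lt; lra).
    change (rU lam Psi rho i) with (log2 (tt rho i)) in Hr. lra. }
  assert (Hsr : forall rho, (forall i, (1 <= i <= K)%nat -> 0 <= rho i) ->
      sumrate K lam Psi rho = log2 (prod1 K (tt rho)) /\ 0 < prod1 K (tt rho)).
  { intros rho Hnn. unfold sumrate.
    change (sum1 K (rU lam Psi rho)) with (sum1 K (fun i => log2 (tt rho i))).
    apply sum_log2. intros i Hi. destruct (Hrel rho Hnn i Hi) as [_ [Ht1 _]]. lra. }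
  assert (HE : 0 <= rhoU - sum1 K rhomin) by lra.
  assert (HV : V = log2 (a ^ K + (rhoU - sum1 K rhomin) / mu 1%nat)).
  { unfold V. rewrite pow2_INR. fold a.
    rewrite <- (log2_pow2 (INR K * rmin)), pow2_INR. fold a.
    assert (0 < a ^ K) by (apply pow_lt; lra).
    assert (Hl1 : lam 1%nat > 0) by (apply Hlampos; lia).
    rewrite <- log2_mult; auto.
    - f_equal. unfold mu. field. split; lra.
    - assert (0 <= (rhoU - sum1 K rhomin) * lam 1%nat / (Psi * a ^ K)).
      { apply Rmult_le_pos. nra. left; apply Rinv_0_lt_compat; nra. } lra. }
  assert (HVB : forall rho, sum1 K rho = rhoU -> V = log2 (B rho K)).
  { intros rho Hs. rewrite HV. unfold B. rewrite Hs. reflexivity. }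
  split; [|split].
  3: { intros rho Hf. destruct (Hsr rho (proj1 Hf)) as [E1 E2]. rewrite E1.
       rewrite (HVB rho (proj1 (proj2 Hf))). apply log2_le; auto.
       apply (proj1 (Hmain rho (proj1 Hf) (Htt rho Hf))). lia. }
  2: { intros rho Hf He1 He.
       destruct Hf as [Hnn [Hs Hr]] eqn:Hfe.
       assert (Hta : forall i, (2 <= i <= K)%nat -> tt rho i = a).
       { intros i Hi. specialize (He i Hi). unfold rho_e in He.
         assert (0 < pow2 (INR (K - i) * rmin)) by (unfold pow2, Rpower; apply exp_pos).
         assert (Hz : rho i - rhomin i - (pow2 rmin - 1) * sum1 (i - 1) (fun j => rho j - rhomin j) = 0).
         { destruct (Rmult_integral _ _ He); auto. lra. }
         rewrite sum1_minus in Hz. fold a in Hz.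
         destruct i as [|m]; [lia|]. replace (S m - 1)%nat with m in Hz by lia.
         rewrite (Hrhomin (S m)) in Hz by lia. replace (S m - 1)%nat with m in Hz by lia.
         fold a in Hz. fold (mu (S m)) in Hz.
         destruct (Hrel rho Hnn (S m)) as [E1 [_ E3]]; [lia|].
         replace (S m - 1)%nat with m in E1, E3 by lia.
         change (sum1 (S m) rho) with (sum1 m rho + rho (S m)) in E1.
         apply (Rmult_eq_reg_r (sum1 m rho + mu (S m))); [|lra]. nra. }
       assert (Hrm : forall i, (2 <= i <= K)%nat -> rU lam Psi rho i = rmin).
       { intros i Hi. change (rU lam Psi rho i) with (log2 (tt rho i)). rewrite Hta; auto. }
       split; [|split]; auto.
       - destruct (Hsr rho Hnn) as [E1 _]. rewrite E1, (HVB rho Hs).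
         f_equal. apply (proj2 (Hmain rho Hnn (Htt rho Hf))); auto.
       - unfold sumrate. destruct K as [|k]; [lia|].
         rewrite (sum_const_tail k _ rmin Hrm). rewrite S_INR. ring. }
  destruct K as [|k]; [lia|].
  set (delta := (rhoU - sum1 (S k) rhomin) / a ^ k).
  assert (Hak : 0 < a ^ k) by (apply pow_lt; lra).
  assert (Hdel : 0 <= delta) by (apply Rmult_le_pos; [lra | left; apply Rinv_0_lt_compat; lra]).
  set (d := fun i => match i with O => 0 | 1%nat => delta | S (S j) => (a - 1) * a ^ j * delta end).
  assert (Hsd : forall j, sum1 (S j) d = a ^ j * delta).
  { induction j. simpl. lra.
    change (sum1 (S (S j)) d) with (sum1 (S j) d + (a - 1) * a ^ j * delta).
    rewrite IHj. simpl. ring. }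
  assert (Hdnn : forall i, 0 <= d i).
  { intros [|[|j]]; simpl; try lra. assert (0 < a ^ j) by (apply pow_lt; lra).
    apply Rmult_le_pos; [|lra]. apply Rmult_le_pos; lra. }
  set (rho0 := fun i => rhomin i + d i).
  assert (Hs0 : forall n, sum1 n rho0 = sum1 n rhomin + sum1 n d) by (intros; apply sum1_plus).
  assert (Hnn0 : forall i, (1 <= i <= S k)%nat -> 0 <= rho0 i).
  { intros i Hi. unfold rho0. specialize (Hdnn i).
    destruct i as [|m]; [lia|]. rewrite (Hrhomin (S m)) by lia.
    replace (S m - 1)%nat with m by lia. fold a. fold (mu (S m)).
    assert (0 <= sum1 m rhomin) by (apply Hsmnn; lia).
    assert (0 < mu (S m)) by (apply Hmupos; lia). nra. }
  exists rho0. split; [split; [|split]|split].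
  - exact Hnn0.
  - rewrite Hs0, Hsd. unfold delta. field. lra.
  - intros i Hi. destruct (Hrel rho0 Hnn0 i Hi) as [E1 [_ E3]].
    assert (Hge : sum1 i rho0 + mu i >= a * (sum1 (i - 1) rho0 + mu i)).
    { destruct i as [|m]; [lia|]. replace (S m - 1)%nat with m in * by lia.
      rewrite !Hs0, Hsd, Hsm by lia.
      destruct m as [|j].
      + simpl. lra.
      + rewrite Hsd. simpl. lra. }
    assert (tt rho0 i >= a).
    { destruct (Rlt_or_le (tt rho0 i) a) as [Hlt|]; [|lra]. exfalso.
      assert (tt rho0 i * (sum1 (i - 1) rho0 + mu i) < a * (sum1 (i - 1) rho0 + mu i)).
      { apply Rmult_lt_compat_r; lra. } lra. }
    change (rU lam Psi rho0 i) with (log2 (tt rho0 i)). rewrite <- HlogA.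
    apply Rle_ge, log2_le; lra.
  - unfold rho_e. simpl sum1. replace (S k - 1)%nat with k by lia.
    rewrite pow2_INR. fold a. unfold rho0. simpl d. unfold delta. replace (sum1 k rhomin + rhomin (S k)) with (sum1 (S k) rhomin) by reflexivity. field. lra.
  - intros i Hi. unfold rho_e.
    rewrite (sum1_ext _ _ d) by (intros; unfold rho0; ring).
    destruct i as [|[|j]]; [lia|lia|].
    replace (S (S j) - 1)%nat with (S j) by lia. rewrite Hsd.
    unfold rho0. simpl d. fold a. ring.
Qed.
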